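(* Let $(X,f)$ be a dynamical system and let $S\subset X$ be an uncountable syndetically scrambled set for $f$ such that for every nonempty open $U\subset X$ there is $n\in\mathbb N$ with $f^n(S)\subset f^n(U)$. Then $f$ has a c-dense syndetically scrambled set $T$. If $S$ is moreover a Cantor set, then $T$ can be chosen to be a dense Mycielski set. Moreover, if $S$ is syndetically $\varepsilon$-scrambled, then $T$ is syndetically $\varepsilon$-scrambled.
   Context: Dynamical system: compact metric space $X$ with metric $d$ and continuous $f$. $T\subset X$ is c-dense if $T\cap U$ is uncountable for every nonempty open $U$. Syndetic: subset of $\mathbb N$ meeting every set with arbitrarily long runs of consecutive integers. $\mathrm{Asy}(f)=\{(x,y):d(f^nx,f^ny)\to0\}$, $\mathrm{SProx}(f)=\{(x,y):\{n:d(f^nx,f^ny)<\eta\}$ syndetic for all $\eta>0\}$. A syndetically scrambled set has at least two points and all distinct pairs in $\mathrm{SProx}(f)\setminus\mathrm{Asy}(f)$; it is syndetically $\varepsilon$-scrambled if also $\limsup_n d(f^nx,f^ny)\ge\varepsilon$ for all distinct $x,y$ in it. Cantor set: nonempty compact perfect totally disconnected; Mycielski set: countable union of Cantor sets. *)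

(* Defs.v *)
From Stdlib Require Import Reals List.
Open Scope R_scope.

Section Defs.
Context {X : Type}.
Variable d : X -> X -> R.

Definition is_metric : Prop :=
  (forall x y, 0 <= d x y) /\ (forall x y, d x y = 0 <-> x = y) /\
  (forall x y, d x y = d y x) /\ (forall x y z, d x z <= d x y + d y z).

Definition is_open (U : X -> Prop) : Prop :=
  forall x, U x -> exists r, 0 < r /\ forall y, d x y < r -> U y.

Definition is_closed (K : X -> Prop) : Prop := is_open (fun x => ~ K x).

Definition is_compact (K : X -> Prop) : Prop :=
  forall (I : Type) (G : I -> X -> Prop),
    (forall i, is_open (G i)) -> (forall x, K x -> exists i, G i x) ->
    exists l : list I, forall x, K x -> exists i, In i l /\ G i x.

Definition continuous (f : X -> X) : Prop :=
  forall x eps, 0 < eps -> exists delta, 0 < delta /\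
    forall y, d x y < delta -> d (f x) (f y) < eps.

Definition countable_set (A : X -> Prop) : Prop :=
  exists g : X -> nat, forall x y, A x -> A y -> g x = g y -> x = y.

Definition uncountable_set (A : X -> Prop) : Prop := ~ countable_set A.

Definition nonempty (A : X -> Prop) : Prop := exists x, A x.

Definition dense (T : X -> Prop) : Prop :=
  forall U, is_open U -> nonempty U -> exists x, U x /\ T x.

Definition c_dense (T : X -> Prop) : Prop :=
  forall U, is_open U -> nonempty U -> uncountable_set (fun x => T x /\ U x).

Definition connected_set (A : X -> Prop) : Prop :=
  ~ exists U V, is_open U /\ is_open V /\
      (exists a, A a /\ U a) /\ (exists b, A b /\ V b) /\
      (forall x, A x -> U x \/ V x) /\ (forall x, A x -> U x -> V x -> False).

Definition totally_disconnected (K : X -> Prop) : Prop :=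
  forall A, (forall x, A x -> K x) -> connected_set A ->
    forall x y, A x -> A y -> x = y.

Definition perfect (K : X -> Prop) : Prop :=
  is_closed K /\
  forall x, K x -> forall r, 0 < r -> exists y, K y /\ y <> x /\ d x y < r.

Definition cantor_set (K : X -> Prop) : Prop :=
  nonempty K /\ is_compact K /\ perfect K /\ totally_disconnected K.

Definition mycielski_set (T : X -> Prop) : Prop :=
  exists C : nat -> X -> Prop, (forall k, cantor_set (C k)) /\
    forall x, T x <-> exists k, C k x.

Definition thick (B : nat -> Prop) : Prop :=
  forall L : nat, exists m, forall i, (i < L)%nat -> B (m + i)%nat.

Definition syndetic (A : nat -> Prop) : Prop :=
  forall B, thick B -> exists n, A n /\ B n.

Variable f : X -> X.

Definition orbit_dist (x y : X) (n : nat) : R :=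
  d (Nat.iter n f x) (Nat.iter n f y).

Definition asymptotic (x y : X) : Prop := Un_cv (orbit_dist x y) 0.

Definition synd_proximal (x y : X) : Prop :=
  forall eta, 0 < eta -> syndetic (fun n => orbit_dist x y n < eta).

Definition synd_scrambled (S : X -> Prop) : Prop :=
  (exists x y, S x /\ S y /\ x <> y) /\
  forall x y, S x -> S y -> x <> y -> synd_proximal x y /\ ~ asymptotic x y.

Definition limsup_ge (a : nat -> R) (eps : R) : Prop :=
  forall delta, 0 < delta -> forall N, exists n, (N <= n)%nat /\ eps - delta < a n.

Definition synd_eps_scrambled (S : X -> Prop) (eps : R) : Prop :=
  synd_scrambled S /\
  forall x y, S x -> S y -> x <> y -> limsup_ge (orbit_dist x y) eps.

End Defs.

(* Main.v *)
Require Import Defs.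
From Stdlib Require Import Reals List.
From Stdlib Require Import Lra Lia Classical ClassicalEpsilon Cantor.
Open Scope R_scope.

Lemma choice_fun {A B : Type} (P : A -> B -> Prop) :
  (forall a, exists b, P a b) -> exists F : A -> B, forall a, P a (F a).
Proof.
  intros H. exists (fun a => proj1_sig (constructive_indefinite_description _ (H a))).
  intros a. exact (proj2_sig (constructive_indefinite_description _ (H a))).
Qed.

Section Basics.
Context {X : Type} (d : X -> X -> R) (Hd : is_metric d).

Lemma d_nonneg x y : 0 <= d x y. Proof. apply Hd. Qed.
Lemma d_xx x : d x x = 0. Proof. apply Hd. reflexivity. Qed.
Lemma d_eq x y : d x y = 0 -> x = y. Proof. apply Hd. Qed.
Lemma d_sym x y : d x y = d y x. Proof. apply Hd. Qed.
Lemma d_tri x y z : d x z <= d x y + d y z. Proof. apply Hd. Qed.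

Lemma d_pos x y : x <> y -> 0 < d x y.
Proof. intros H. destruct (d_nonneg x y) as [h|h]; auto. exfalso; apply H, d_eq; auto. Qed.

Lemma open_ext (P Q : X -> Prop) : (forall x, P x <-> Q x) -> is_open d P -> is_open d Q.
Proof.
  intros E HP x Qx. destruct (HP x (proj2 (E x) Qx)) as [r [r0 H]].
  exists r; split; auto. intros y hy; apply E; auto.
Qed.

Lemma closed_ext (P Q : X -> Prop) : (forall x, P x <-> Q x) -> is_closed d P -> is_closed d Q.
Proof.
  intros E HP. unfold is_closed in *. apply (open_ext (fun x => ~ P x)); auto.
  intros x; rewrite (E x); tauto.
Qed.

Lemma open_ball c r : is_open d (fun y => d c y < r).
Proof.
  intros x hx. exists (r - d c x); split; [lra|].
  intros y hy. pose proof (d_tri c x y); lra.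
Qed.

Lemma closed_empty : is_closed d (fun _ => False).
Proof. intros x _. exists 1; split; [lra|]. tauto. Qed.

Lemma closed_full : is_closed d (fun _ => True).
Proof. intros x H; tauto. Qed.

Lemma closed_union (A B : X -> Prop) : is_closed d A -> is_closed d B ->
  is_closed d (fun x => A x \/ B x).
Proof.
  intros HA HB x hx.
  destruct (HA x) as [r1 [r1p H1]]; [tauto|].
  destruct (HB x) as [r2 [r2p H2]]; [tauto|].
  exists (Rmin r1 r2); split; [apply Rmin_pos; auto|].
  intros y hy [h|h]; [apply (H1 y) | apply (H2 y)]; auto.
  - pose proof (Rmin_l r1 r2); lra.
  - pose proof (Rmin_r r1 r2); lra.
Qed.

Lemma closed_inter (A B : X -> Prop) : is_closed d A -> is_closed d B ->
  is_closed d (fun x => A x /\ B x).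
Proof.
  intros HA HB x hx.
  destruct (classic (A x)) as [a|a].
  - destruct (HB x) as [r [rp H]]; [tauto|]. exists r; split; auto.
    intros y hy [_ h]. apply (H y); auto.
  - destruct (HA x) as [r [rp H]]; auto. exists r; split; auto.
    intros y hy [h _]. apply (H y); auto.
Qed.

Lemma closed_bigcap (F : nat -> X -> Prop) : (forall n, is_closed d (F n)) ->
  is_closed d (fun x => forall n, F n x).
Proof.
  intros HF x hx. apply not_all_ex_not in hx. destruct hx as [n hn].
  destruct (HF n x hn) as [r [rp H]]. exists r; split; auto.
  intros y hy h. apply (H y hy (h n)).
Qed.

Lemma closed_cball c r : is_closed d (fun y => d c y <= r).
Proof.
  intros x hx. exists (d c x - r); split; [lra|].
  intros y hy h. pose proof (d_tri c y x). rewrite (d_sym y x) in H. lra.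
Qed.

Lemma closed_prop (P : Prop) (A : X -> Prop) : is_closed d A -> is_closed d (fun x => P /\ A x).
Proof.
  intros HA. destruct (classic P) as [p|p].
  - apply (closed_ext A); auto. intros; tauto.
  - apply (closed_ext (fun _ => False)); [intros; tauto| apply closed_empty].
Qed.

Lemma cont_iter f n : continuous d f -> continuous d (Nat.iter n f).
Proof.
  intros Hf. induction n as [|n IH]; simpl.
  - intros x e he. exists e; split; auto.
  - intros x e he. destruct (Hf (Nat.iter n f x) e he) as [e1 [e1p H1]].
    destruct (IH x e1 e1p) as [e2 [e2p H2]]. exists e2; split; auto.
    intros y hy. apply H1, H2, hy.
Qed.

Lemma closed_preim_le g c t : continuous d g -> is_closed d (fun y => d c (g y) <= t).
Proof.
  intros Hg x hx. assert (h : 0 < d c (g x) - t) by lra.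
  destruct (Hg x _ h) as [del [dp H]]. exists del; split; auto.
  intros y hy hh. specialize (H y hy). pose proof (d_tri c (g y) (g x)).
  rewrite (d_sym (g y) (g x)) in H0. lra.
Qed.

Lemma closed_preim_ge g c t : continuous d g -> is_closed d (fun y => t <= d c (g y)).
Proof.
  intros Hg x hx. assert (h : 0 < t - d c (g x)) by lra.
  destruct (Hg x _ h) as [del [dp H]]. exists del; split; auto.
  intros y hy hh. specialize (H y hy). pose proof (d_tri c (g x) (g y)). lra.
Qed.

Lemma closed_preim g (A : X -> Prop) : continuous d g -> is_closed d A ->
  is_closed d (fun y => A (g y)).
Proof.
  intros Hg HA x hx. destruct (HA (g x) hx) as [r [rp H]].
  destruct (Hg x r rp) as [del [dp H2]]. exists del; split; [exact dp|].
  intros y hy. apply H, H2, hy.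
Qed.

End Basics.

Lemma in_sum_le n l : In n l -> (n <= fold_right plus 0%nat l)%nat.
Proof. induction l; simpl; [tauto|]. intros [h|h]; subst; [lia|]. specialize (IHl h); lia. Qed.

Lemma small_inv eps : 0 < eps -> exists n : nat, / (INR n + 1) < eps.
Proof.
  intros he. destruct (archimed_cor1 eps he) as [N [h1 h2]]. exists N.
  apply Rle_lt_trans with (/ INR N); auto. apply Rinv_le_contravar.
  apply lt_0_INR; auto. lra.
Qed.

Lemma inv_pos n : 0 < / (INR n + 1).
Proof. apply Rinv_0_lt_compat. pose proof (pos_INR n); lra. Qed.

Lemma inv_anti n m : (n <= m)%nat -> / (INR m + 1) <= / (INR n + 1).
Proof.
  intros h. apply Rinv_le_contravar. pose proof (pos_INR n); lra.
  apply le_INR in h; lra.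
Qed.

Section Compact.
Context {X : Type} (d : X -> X -> R) (Hd : is_metric d)
  (Hcpt : is_compact d (fun _ => True)).

Lemma ball_cover rho : 0 < rho -> exists l : list X, forall x, exists c, In c l /\ d c x < rho.
Proof.
  intros hr. destruct (Hcpt X (fun c y => d c y < rho)) as [l Hl].
  - intros c; apply open_ball; auto.
  - intros x _. exists x. rewrite d_xx; auto.
  - exists l. intros x. destruct (Hl x I) as [c [h1 h2]]; eauto.
Qed.

Lemma dist_bounded p : exists M, forall y, d p y <= M.
Proof.
  destruct (ball_cover 1) as [l Hl]; [lra|].
  exists (1 + fold_right (fun c acc => d p c + acc) 0 l).
  intros y. destruct (Hl y) as [c [hc hd]].
  assert (d p c <= fold_right (fun c acc => d p c + acc) 0 l).
  { clear Hl hd. induction l; simpl in *; [tauto|].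
    assert (0 <= fold_right (fun c acc => d p c + acc) 0 l).
    { clear - Hd. induction l; simpl; [lra|]. pose proof (d_nonneg d Hd p a); lra. }
    destruct hc as [h|h]; subst.
    - lra.
    - specialize (IHl h). pose proof (d_nonneg d Hd p a); lra. }
  pose proof (d_tri d Hd p c y); lra.
Qed.

Lemma closed_compact K : is_closed d K -> is_compact d K.
Proof.
  intros HK Ix G HG Hcov.
  destruct (Hcpt (option Ix) (fun o x => match o with Some i => G i x | None => ~ K x end))
    as [l Hl].
  - intros [i|]; auto.
  - intros x _. destruct (classic (K x)) as [k|k].
    + destruct (Hcov x k) as [i hi]. exists (Some i); auto.
    + exists None; auto.
  - exists (concat (map (fun o => match o with Some i => i :: nil | None => nil end) l)).
    intros x kx. destruct (Hl x I) as [[i|] [h1 h2]]; [|tauto].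
    exists i; split; auto. apply in_concat. exists (i :: nil); split; [|left; auto].
    apply in_map_iff. exists (Some i); auto.
Qed.

Lemma compact_closed K : is_compact d K -> is_closed d K.
Proof.
  intros HK z hz.
  destruct (HK nat (fun n w => / (INR n + 1) < d z w)) as [l Hl].
  - intros n w hw. exists (d z w - / (INR n + 1)); split; [lra|].
    intros y hy. pose proof (d_tri d Hd z y w). rewrite (d_sym d Hd y w) in H. lra.
  - intros w kw. assert (z <> w) by (intro; subst; tauto).
    apply (d_pos d Hd) in H. apply small_inv in H. destruct H as [n hn]; exists n; exact hn.
  - exists (/ (INR (fold_right plus 0%nat l) + 1)); split; [apply inv_pos|].
    intros y hy ky. destruct (Hl y ky) as [n [hn h]].
    pose proof (inv_anti _ _ (in_sum_le n l hn)). lra.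
Qed.

Lemma image_compact K g : continuous d g -> is_compact d K ->
  is_compact d (fun w => exists z, K z /\ g z = w).
Proof.
  intros Hg HK Ix G HG Hcov.
  destruct (HK Ix (fun i z => G i (g z))) as [l Hl].
  - intros i. intros z hz. destruct (HG i (g z) hz) as [r [rp H]].
    destruct (Hg z r rp) as [del [dp H2]]. exists del; split; [exact dp|].
    intros y hy. apply H, H2, hy.
  - intros z kz. apply Hcov. eauto.
  - exists l. intros w [z [kz e]]. subst. apply Hl; auto.
Qed.

Lemma nested_point (F : nat -> X -> Prop) :
  (forall n, is_closed d (F n)) -> (forall n, exists z, F n z) ->
  (forall n z, F (S n) z -> F n z) -> exists z, forall n, F n z.
Proof.
  intros HF Hne Hmon. apply NNPP. intros Hn.
  assert (mono : forall n m z, (n <= m)%nat -> F m z -> F n z).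
  { intros n m z h. induction h; auto. }
  destruct (Hcpt nat (fun n z => ~ F n z)) as [l Hl].
  - intros n; apply HF.
  - intros z _. apply NNPP; intro h. apply Hn. exists z. intro n.
    apply NNPP; intro h2. apply h; eauto.
  - destruct (Hne (fold_right plus 0%nat l)) as [z hz].
    destruct (Hl z I) as [i [hi h]]. apply h. eapply mono; [|exact hz].
    apply in_sum_le; auto.
Qed.

End Compact.

Section Count.
Context {X : Type}.

Lemma count_sub (A B : X -> Prop) : (forall x, A x -> B x) -> countable_set B -> countable_set A.
Proof. intros h [g hg]. exists g. intros; apply hg; auto. Qed.

Lemma uncount_sup (A B : X -> Prop) : (forall x, A x -> B x) -> uncountable_set A -> uncountable_set B.
Proof. intros h hA hB. apply hA. eapply count_sub; eauto. Qed.

Lemma count_inj {Y : Type} (A : X -> Prop) (g : X -> Y) :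
  (forall x y, A x -> A y -> g x = g y -> x = y) ->
  countable_set (fun w => exists z, A z /\ g z = w) -> countable_set A.
Proof.
  intros hi [G hG]. exists (fun x => G (g x)). intros x y ax ay e.
  apply hi; auto. apply hG; eauto.
Qed.

Lemma uncount_inj {Y : Type} (A : X -> Prop) (g : X -> Y) :
  (forall x y, A x -> A y -> g x = g y -> x = y) ->
  uncountable_set A -> uncountable_set (fun w => exists z, A z /\ g z = w).
Proof. intros hi hA hc. apply hA. eapply count_inj; eauto. Qed.

Lemma count_le1 (A : X -> Prop) : (forall x y, A x -> A y -> x = y) -> countable_set A.
Proof. intros h. exists (fun _ => 0%nat). intros; auto. Qed.

Lemma uncount_two (A : X -> Prop) : uncountable_set A -> exists x y, A x /\ A y /\ x <> y.
Proof.
  intros h. apply NNPP; intro hn. apply h, count_le1. intros x y ax ay.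
  apply NNPP; intro ne. apply hn; eauto.
Qed.

Lemma uncount_ne (A : X -> Prop) : uncountable_set A -> exists x, A x.
Proof. intros h. destruct (uncount_two A h) as [x [y [hx _]]]; eauto. Qed.

Lemma count_bigcup (F : nat -> X -> Prop) : (forall n, countable_set (F n)) ->
  countable_set (fun x => exists n, F n x).
Proof.
  intros H. destruct (choice_fun (fun n g => forall x y, F n x -> F n y -> g x = g y -> x = y) H)
    as [G HG].
  destruct (choice_fun (fun x n => (exists m, F m x) -> F n x)) as [k Hk].
  { intros x. destruct (classic (exists m, F m x)) as [[m hm]|hn].
    - exists m; auto.
    - exists 0%nat; intro; tauto. }
  exists (fun x => to_nat (k x, G (k x) x)). intros x y hx hy e.
  apply (f_equal of_nat) in e. rewrite !cancel_of_to in e. injection e as e1 e2.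
  apply (HG (k x)); auto. rewrite e1; auto. rewrite e2, e1. auto.
Qed.

Lemma count_union2 (A B : X -> Prop) : countable_set A -> countable_set B ->
  countable_set (fun x => A x \/ B x).
Proof.
  intros hA hB.
  apply (count_sub _ (fun x => exists n, (if Nat.eqb n 0 then A else B) x)).
  - intros x [h|h]; [exists 0%nat | exists 1%nat]; auto.
  - apply count_bigcup. intros n; destruct (Nat.eqb n 0); auto.
Qed.

Lemma count_list {Y : Type} (l : list Y) (F : Y -> X -> Prop) :
  (forall c, In c l -> countable_set (F c)) ->
  countable_set (fun x => exists c, In c l /\ F c x).
Proof.
  induction l as [|a l IH]; intros H.
  - apply count_le1. intros x y [c [[] _]].
  - apply (count_sub _ (fun x => F a x \/ exists c, In c l /\ F c x)).
    + intros x [c [[e|hc] h]]; [subst; left; auto | right; eauto].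
    + apply count_union2; [apply H; simpl; auto|]. apply IH; intros; apply H; simpl; auto.
Qed.

End Count.

Lemma cantor_diag : ~ exists G : (nat -> bool) -> nat,
  forall a b, G a = G b -> forall n, a n = b n.
Proof.
  intros [G HG].
  destruct (choice_fun (fun n (b : nat -> bool) => (exists a, G a = n) -> G b = n)) as [B HB].
  { intros n. destruct (classic (exists a, G a = n)) as [[a ha]|hn].
    - exists a; auto.
    - exists (fun _ => true); tauto. }
  set (a := fun n => negb (B n n)).
  assert (h : G (B (G a)) = G a) by (apply HB; eauto).
  specialize (HG _ _ h (G a)).
  assert (HG2 : B (G a) (G a) = negb (B (G a) (G a))) by exact HG.
  destruct (B (G a) (G a)); discriminate.
Qed.

Section Split.
Context {X : Type} (d : X -> X -> R) (Hd : is_metric d)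
  (Hcpt : is_compact d (fun _ => True)).

Lemma dense_seq (x0 : X) : exists e : nat -> X, forall x eps, 0 < eps -> exists j, d (e j) x < eps.
Proof.
  destruct (choice_fun (fun (m : nat) l => forall x, exists c, In c l /\ d c x < / (INR m + 1)))
    as [L HL].
  { intros m. apply (ball_cover d Hd Hcpt). apply inv_pos. }
  exists (fun k => nth (snd (of_nat k)) (L (fst (of_nat k))) x0).
  intros x eps he. destruct (small_inv eps he) as [m hm].
  destruct (HL m x) as [c [hc hdc]]. destruct (In_nth (L m) c x0 hc) as [j [_ hj]].
  exists (to_nat (m, j)). rewrite cancel_of_to. simpl. rewrite hj. lra.
Qed.

Definition nosplit_at (W : X -> Prop) (p : X) :=
  forall t1 t2, t1 < t2 -> countable_set (fun x => W x /\ d p x <= t1) \/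
                          countable_set (fun x => W x /\ t2 <= d p x).

Lemma nosplit_sphere W p : nosplit_at W p -> exists m, countable_set (fun x => W x /\ d p x <> m).
Proof.
  intros Hns.
  set (E := fun t => countable_set (fun x => W x /\ d p x <= t)).
  assert (Edown : forall t t', t <= t' -> E t' -> E t).
  { intros t t' h. apply count_sub. intros x [a b]; split; auto; lra. }
  destruct (classic (countable_set W)) as [cW|uW].
  { exists 0. eapply count_sub; [|exact cW]. intros x [a _]; auto. }
  destruct (dist_bounded d Hd Hcpt p) as [M HM].
  assert (bE : bound E).
  { exists M. intros t ht. destruct (Rle_dec t M) as [h|h]; auto. exfalso. apply uW.
    eapply count_sub; [|exact ht]. intros x wx; split; auto. specialize (HM x); lra. }
  assert (neE : exists t, E t).
  { exists (-1). apply count_le1. intros x y [_ h]. pose proof (d_nonneg d Hd p x); lra. }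
  destruct (completeness E bE neE) as [m [mub mlub]].
  assert (below : forall t, t < m -> E t).
  { intros t ht. apply NNPP; intro hn. assert (is_upper_bound E t).
    { intros t' h'. destruct (Rle_dec t' t) as [a|a]; auto. exfalso; apply hn.
      apply (Edown t t'); auto; lra. }
    specialize (mlub t H); lra. }
  assert (above : forall t, m < t -> ~ E t).
  { intros t ht h. specialize (mub t h). lra. }
  exists m. apply (count_sub _ (fun x => (exists n, W x /\ d p x <= m - / (INR n + 1)) \/
                                   (exists n, W x /\ m + / (INR n + 1) <= d p x))).
  - intros x [wx hx]. destruct (Rlt_dec (d p x) m) as [a|a].
    + left. destruct (small_inv (m - d p x)) as [n hn]; [lra|]. exists n; split; auto; lra.
    + right. assert (m < d p x) by lra.
      destruct (small_inv (d p x - m)) as [n hn]; [lra|]. exists n; split; auto; lra.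
  - apply count_union2; apply count_bigcup; intros n.
    + apply below. pose proof (inv_pos n); lra.
    + pose proof (inv_pos n).
      destruct (Hns (m + / (INR n + 1) / 2) (m + / (INR n + 1))) as [h|h]; [lra| |exact h].
      exfalso. apply (above (m + / (INR n + 1) / 2)); [lra|exact h].
Qed.

Lemma split_lemma (W : X -> Prop) : uncountable_set W ->
  exists p t1 t2, t1 < t2 /\ uncountable_set (fun x => W x /\ d p x <= t1) /\
                            uncountable_set (fun x => W x /\ t2 <= d p x).
Proof.
  intros uW. apply NNPP; intro hn.
  assert (Hns : forall p, nosplit_at W p).
  { intros p t1 t2 h. apply NNPP; intro h2. apply hn. exists p, t1, t2. split; auto.
    split; intro h3; apply h2; auto. }
  destruct (uncount_ne W uW) as [x0 _].
  destruct (dense_seq x0) as [e He].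
  destruct (choice_fun (fun j m => countable_set (fun x => W x /\ d (e j) x <> m)))
    as [m Hm].
  { intros j; apply nosplit_sphere, Hns. }
  apply uW. apply (count_sub _ (fun x => (exists j, W x /\ d (e j) x <> m j) \/
                                  (W x /\ forall j, d (e j) x = m j))).
  - intros x wx. destruct (classic (exists j, d (e j) x <> m j)) as [[j hj]|hj].
    + left; exists j; auto.
    + right; split; auto. intros j. apply NNPP; intro; apply hj; eauto.
  - apply count_union2; [apply count_bigcup; auto|].
    apply count_le1. intros x y [_ hx] [_ hy]. apply (d_eq d Hd).
    apply Rle_antisym; [|apply (d_nonneg d Hd)].
    apply Rnot_lt_le; intro hpos.
    destruct (He x (d x y / 2)) as [j hj]; [lra|].
    pose proof (d_tri d Hd x (e j) y). rewrite (d_sym d Hd x (e j)) in H.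
    assert (eq : d (e j) y = d (e j) x) by (rewrite hx, hy; auto). lra.
Qed.

End Split.

Fixpoint pre (a : nat -> bool) (n : nat) : list bool :=
  match n with O => nil | S n => a n :: pre a n end.

Lemma pre_length a n : length (pre a n) = n.
Proof. induction n; simpl; auto. Qed.

Section Tree.
Context {X : Type} (d : X -> X -> R) (Hd : is_metric d)
  (Hcpt : is_compact d (fun _ => True)).
Variables (N : list bool -> X -> Prop) (g : X -> X).
Hypothesis T1 : forall s, is_closed d (N s).
Hypothesis T2 : forall s, exists z, N s z.
Hypothesis T3 : forall b s z, N (b :: s) z -> N s z.
Hypothesis T4 : forall s z z', N (false :: s) z -> N (true :: s) z' -> g z <> g z'.
Hypothesis T5 : forall b s, exists c, forall z, N (b :: s) z -> d c z <= / (INR (length s) + 1).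

Definition Cset z := forall n, exists s, length s = n /\ N s z.

Lemma diff_level s : forall t z z', length s = length t -> s <> t -> N s z -> N t z' -> g z <> g z'.
Proof.
  induction s as [|a s IH]; intros [|b t] z z' hl hne hz hz'; simpl in hl; try discriminate.
  - tauto.
  - destruct (classic (s = t)) as [e|e].
    + subst. destruct a, b; try tauto.
      * intro h. apply (T4 t z' z hz' hz). auto.
      * apply (T4 t z z' hz hz').
    + apply (IH t z z'); auto; eapply T3; eauto.
Qed.

Lemma level_closed n : forall F : list bool -> X -> Prop, (forall u, is_closed d (F u)) ->
  is_closed d (fun z => exists u, length u = n /\ F u z).
Proof.
  induction n as [|n IH]; intros F HF.
  - apply (closed_ext d (F nil)); auto. intros z; split.
    + intros h; exists nil; auto.
    + intros [[|b u] [hl h]]; simpl in hl; try discriminate; auto.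
  - apply (closed_ext d (fun z => exists u, length u = n /\ (F (false :: u) z \/ F (true :: u) z))).
    + intros z; split.
      * intros [u [hl [h|h]]]; eexists; split; [|exact h| |exact h]; simpl; auto.
      * intros [[|b u] [hl h]]; simpl in hl; try discriminate.
        exists u; split; [lia|]. destruct b; auto.
    + apply IH. intros u; apply closed_union; auto.
Qed.

Lemma Cset_closed : is_closed d Cset.
Proof. apply closed_bigcap. intros n. apply level_closed; auto. Qed.

Lemma suffix s : forall z n, N s z -> (n <= length s)%nat -> exists u, length u = n /\ N u z.
Proof.
  induction s as [|a s IH]; intros z n hz hn; simpl in hn.
  - exists nil; split; auto; simpl; lia.
  - destruct (Nat.eq_dec n (S (length s))) as [e|e].
    + exists (a :: s); simpl; auto.
    + apply (IH z n); [eapply T3; eauto | lia].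
Qed.

Lemma branch a s : exists z, Cset z /\ forall n, N (pre a n ++ s) z.
Proof.
  destruct (nested_point d Hcpt (fun n => N (pre a n ++ s))) as [z hz].
  - intros; apply T1.
  - intros; apply T2.
  - intros n z h. simpl in h. eapply T3; eauto.
  - exists z; split; auto. intros n. apply (suffix (pre a n ++ s)); auto.
    rewrite length_app, pre_length; lia.
Qed.

Lemma Cset_root z : Cset z -> N nil z.
Proof. intros h. destruct (h 0%nat) as [[|b u] [hl hu]]; simpl in hl; try discriminate; auto. Qed.

Lemma cball_diam c r z z' : d c z <= r -> d c z' <= r -> d z z' <= 2 * r.
Proof. intros h1 h2. pose proof (d_tri d Hd z c z'). rewrite (d_sym d Hd z c) in H. lra. Qed.

Lemma sep z z' : Cset z -> Cset z' -> z <> z' ->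
  exists s t, length s = length t /\ s <> t /\ N s z /\ N t z'.
Proof.
  intros hz hz' ne. pose proof (d_pos d Hd _ _ ne) as hp.
  destruct (small_inv (d z z' / 2)) as [n hn]; [lra|].
  destruct (hz (S n)) as [s [hs Ns]]. destruct (hz' (S n)) as [t [ht Nt]].
  exists s, t. split; [lia|]. split; auto. intro e; subst t.
  destruct s as [|b s0]; simpl in hs; [discriminate|]. injection hs as hs.
  destruct (T5 b s0) as [c hc]. pose proof (cball_diam c _ z z' (hc z Ns) (hc z' Nt)).
  rewrite hs in H. lra.
Qed.

Lemma Cset_inj z z' : Cset z -> Cset z' -> g z = g z' -> z = z'.
Proof.
  intros hz hz' e. apply NNPP; intro ne.
  destruct (sep z z' hz hz' ne) as [s [t [hl [hst [Ns Nt]]]]].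
  apply (diff_level s t z z' hl hst Ns Nt e).
Qed.

Lemma Cset_perfect z r : Cset z -> 0 < r -> exists y, Cset y /\ y <> z /\ d z y < r.
Proof.
  intros hz hr. destruct (small_inv (r / 2)) as [n hn]; [lra|].
  destruct (hz (S n)) as [s [hs Ns]].
  destruct s as [|b0 s0]; simpl in hs; [discriminate|]. injection hs as hs.
  destruct (T5 b0 s0) as [c hc]. rewrite hs in hc.
  destruct (branch (fun _ => false) (false :: b0 :: s0)) as [y0 [C0 N0]].
  destruct (branch (fun _ => false) (true :: b0 :: s0)) as [y1 [C1 N1]].
  specialize (N0 0%nat); specialize (N1 0%nat); simpl in N0, N1.
  pose proof (T4 _ _ _ N0 N1) as hg.
  assert (dist : forall y, N (b0 :: s0) y -> d z y < r).
  { intros y hy. pose proof (cball_diam c _ z y (hc z Ns) (hc y hy)). lra. }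
  destruct (classic (y0 = z)) as [e|e].
  - exists y1; split; auto. split.
    + intro e2; subst. apply hg; auto.
    + apply dist; eapply T3; eauto.
  - exists y0; split; auto. split; auto. apply dist; eapply T3; eauto.
Qed.

Lemma Cset_td : totally_disconnected d Cset.
Proof.
  intros A HA Acon x y ax ay. apply NNPP; intro ne.
  destruct (sep x y (HA x ax) (HA y ay) ne) as [s [t [hl [hst [Ns Nt]]]]].
  set (O := fun w => exists u, length u = length s /\ (u <> s /\ N u w)).
  assert (Ocl : is_closed d O).
  { apply level_closed. intros u. apply closed_prop; auto. }
  assert (uniq : forall u w, length u = length s -> N u w -> N s w -> u = s).
  { intros u w hu h1 h2. apply NNPP; intro hne. apply (diff_level u s w w hu hne h1 h2); auto. }
  apply Acon. exists (fun w => ~ O w), (fun w => ~ N s w).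
  split; [exact Ocl|]. split; [apply T1|].
  split; [exists x; split; auto; intros [u [hu [hne hN]]]; apply hne; eapply uniq; eauto|].
  split; [exists y; split; auto; intro h; apply hst; symmetry; eapply uniq; eauto; lia|].
  split.
  - intros a aa. destruct (HA a aa (length s)) as [w [hw Nw]].
    destruct (classic (w = s)) as [e|e].
    + subst w. left. intros [u [hu [hne hN]]]. apply hne; eapply uniq; eauto.
    + right. intro h. apply e. eapply uniq; eauto.
  - intros a aa hU hV. destruct (HA a aa (length s)) as [w [hw Nw]].
    destruct (classic (w = s)) as [e|e].
    + subst; tauto.
    + apply hU. exists w; auto.
Qed.

Lemma Cset_uncount : uncountable_set Cset.
Proof.
  intros [G HG].
  destruct (choice_fun (fun a z => Cset z /\ forall n, N (pre a n) z)) as [phi Hphi].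
  { intros a. destruct (branch a nil) as [z [hz h]]. exists z; split; auto.
    intros n; specialize (h n); rewrite app_nil_r in h; auto. }
  apply cantor_diag. exists (fun a => G (phi a)). intros a b e n.
  assert (e2 : phi a = phi b) by (apply HG; auto; apply Hphi).
  apply NNPP; intro hn.
  apply (diff_level (pre a (S n)) (pre b (S n)) (phi a) (phi b)).
  - rewrite !pre_length; auto.
  - simpl. intro h; injection h; auto.
  - apply Hphi.
  - apply Hphi.
  - rewrite e2; auto.
Qed.

Lemma Cset_cantor : cantor_set d Cset.
Proof.
  split; [|split; [|split]].
  - destruct (branch (fun _ => false) nil) as [z [hz _]]; exists z; auto.
  - apply (closed_compact d Hcpt). apply Cset_closed.
  - split; [apply Cset_closed|]. intros x hx r hr.
    destruct (Cset_perfect x r hx hr) as [y [hy [ne h]]]. exists y; auto.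
  - apply Cset_td.
Qed.

End Tree.

Section Build.
Context {X : Type} (d : X -> X -> R) (Hd : is_metric d)
  (Hcpt : is_compact d (fun _ => True)).
Variables (g : X -> X) (K0 : X -> Prop).
Hypothesis Hg : continuous d g.

Definition img (K : X -> Prop) := fun w => exists z, K z /\ g z = w.

Lemma shrink rho K : 0 < rho -> uncountable_set (img K) ->
  exists c, uncountable_set (img (fun z => K z /\ d c z <= rho)).
Proof.
  intros hr hK. destruct (ball_cover d Hd Hcpt rho hr) as [l Hl].
  apply NNPP; intro hn. apply hK.
  apply (count_sub _ (fun w => exists c, In c l /\ img (fun z => K z /\ d c z <= rho) w)).
  - intros w [z [kz e]]. destruct (Hl z) as [c [hc hdc]]. exists c; split; auto.
    exists z; split; auto. split; auto; lra.
  - apply count_list. intros c _. apply NNPP; intro h. apply hn; eauto.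
Qed.

Lemma step n K : is_closed d K -> uncountable_set (img K) ->
  exists K1 K2, is_closed d K1 /\ is_closed d K2 /\ uncountable_set (img K1) /\
    uncountable_set (img K2) /\ (forall z, K1 z -> K z) /\ (forall z, K2 z -> K z) /\
    (forall z z', K1 z -> K2 z' -> g z <> g z') /\
    (exists c, forall z, K1 z -> d c z <= / (INR n + 1)) /\
    (exists c, forall z, K2 z -> d c z <= / (INR n + 1)).
Proof.
  intros Kc Ku. destruct (split_lemma d Hd Hcpt (img K) Ku) as [p [t1 [t2 [ht [u1 u2]]]]].
  set (P1 := fun z => K z /\ d p (g z) <= t1).
  set (P2 := fun z => K z /\ t2 <= d p (g z)).
  assert (i1 : uncountable_set (img P1)).
  { eapply uncount_sup; [|exact u1]. intros w [[z [kz e]] h]. subst. exists z; split; auto.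
    split; auto. }
  assert (i2 : uncountable_set (img P2)).
  { eapply uncount_sup; [|exact u2]. intros w [[z [kz e]] h]. subst. exists z; split; auto.
    split; auto. }
  pose proof (inv_pos n) as hp.
  destruct (shrink _ _ hp i1) as [c1 h1]. destruct (shrink _ _ hp i2) as [c2 h2].
  exists (fun z => P1 z /\ d c1 z <= / (INR n + 1)), (fun z => P2 z /\ d c2 z <= / (INR n + 1)).
  unfold P1, P2.
  split; [|split; [|split; [|split; [|split; [|split; [|split; [|split]]]]]]]; auto.
  - apply closed_inter; [apply closed_inter; auto; apply closed_preim_le; auto|].
    apply closed_cball; auto.
  - apply closed_inter; [apply closed_inter; auto; apply closed_preim_ge; auto|].
    apply closed_cball; auto.
  - intros z h; apply h.
  - intros z h; apply h.
  - intros z z' [[_ a] _] [[_ b] _] e. rewrite e in a. lra.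
  - exists c1; intros z h; apply h.
  - exists c2; intros z h; apply h.
Qed.

Hypothesis K0c : is_closed d K0.
Hypothesis K0u : uncountable_set (img K0).

Definition Good K := is_closed d K /\ uncountable_set (img K) /\ forall z, K z -> K0 z.
Definition GK := {K : X -> Prop | Good K}.

Lemma build : exists C, cantor_set d C /\ uncountable_set C /\ (forall z, C z -> K0 z) /\
  (forall z z', C z -> C z' -> g z = g z' -> z = z').
Proof.
  destruct (choice_fun (fun (p : nat * GK) (q : GK * GK) =>
    let K := proj1_sig (snd p) in let K1 := proj1_sig (fst q) in let K2 := proj1_sig (snd q) in
    (forall z, K1 z -> K z) /\ (forall z, K2 z -> K z) /\
    (forall z z', K1 z -> K2 z' -> g z <> g z') /\
    (exists c, forall z, K1 z -> d c z <= / (INR (fst p) + 1)) /\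
    (exists c, forall z, K2 z -> d c z <= / (INR (fst p) + 1)))) as [F HF].
  { intros [n [K [Kc [Ku Ks]]]]. simpl.
    destruct (step n K Kc Ku) as [K1 [K2 [c1 [c2 [u1 [u2 [s1 [s2 [dj [b1 b2]]]]]]]]]].
    assert (G1 : Good K1) by (split; auto; split; auto).
    assert (G2 : Good K2) by (split; auto; split; auto).
    exists (exist _ K1 G1, exist _ K2 G2). simpl. auto. }
  assert (G0 : Good K0) by (split; auto; split; auto).
  set (node := fix node (s : list bool) : GK :=
    match s with nil => exist _ K0 G0
    | b :: s' => if b then snd (F (length s', node s')) else fst (F (length s', node s')) end).
  set (N := fun s => proj1_sig (node s)).
  assert (NG : forall s, Good (N s)) by (intros s; exact (proj2_sig (node s))).
  assert (Nc : forall b s, N (b :: s) = proj1_sig ((if b then snd else fst) (F (length s, node s)))).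
  { intros [|] s; reflexivity. }
  exists (Cset N).
  assert (T1 : forall s, is_closed d (N s)) by (intros s; apply NG).
  assert (T2 : forall s, exists z, N s z).
  { intros s. destruct (NG s) as [_ [u _]]. destruct (uncount_ne _ u) as [w [z [hz _]]]; eauto. }
  assert (T3 : forall b s z, N (b :: s) z -> N s z).
  { intros b s z. rewrite Nc. destruct (HF (length s, node s)) as [a1 [a2 _]]. destruct b; [exact (a2 z)|exact (a1 z)]. }
  assert (T4 : forall s z z', N (false :: s) z -> N (true :: s) z' -> g z <> g z').
  { intros s z z'. rewrite !Nc. destruct (HF (length s, node s)) as [_ [_ [a _]]]. exact (a z z'). }
  assert (T5 : forall b s, exists c, forall z, N (b :: s) z -> d c z <= / (INR (length s) + 1)).
  { intros b s. rewrite Nc. destruct (HF (length s, node s)) as [_ [_ [_ [a1 a2]]]].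
    destruct b; [exact a2|exact a1]. }
  split; [apply (Cset_cantor d Hd Hcpt N g); auto|].
  split; [apply (Cset_uncount d Hcpt N g); auto|].
  split.
  - intros z hz. apply (Cset_root N) in hz. apply (NG nil); auto.
  - apply (Cset_inj d Hd N g); auto.
Qed.

End Build.

Section Transfer.
Context {X : Type} (d : X -> X -> R) (f : X -> X).

Lemma orbit_eq x x' y y' N : Nat.iter N f y = Nat.iter N f x -> Nat.iter N f y' = Nat.iter N f x' ->
  forall n, (N <= n)%nat -> orbit_dist d f y y' n = orbit_dist d f x x' n.
Proof.
  intros hy hy' n hn. unfold orbit_dist.
  replace n with ((n - N) + N)%nat by lia. rewrite !Nat.iter_add, hy, hy'. auto.
Qed.

Lemma ev_eq_asym (Hd : is_metric d) x x' n : Nat.iter n f x = Nat.iter n f x' -> asymptotic d f x x'.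
Proof.
  intros h eps he. exists n. intros m hm. unfold orbit_dist.
  replace m with ((m - n) + n)%nat by lia. rewrite !Nat.iter_add, h, (d_xx d Hd).
  unfold Rdist. rewrite Rminus_0_r, Rabs_R0. lra.
Qed.

Lemma S_inj (Hd : is_metric d) S x x' n : synd_scrambled d f S -> S x -> S x' ->
  Nat.iter n f x = Nat.iter n f x' -> x = x'.
Proof.
  intros [_ H] hx hx' e. apply NNPP; intro ne. destruct (H x x' hx hx' ne) as [_ na].
  apply na. eapply ev_eq_asym; eauto.
Qed.

Lemma transfer S T : synd_scrambled d f S -> (exists y y', T y /\ T y' /\ y <> y') ->
  (forall y y', T y -> T y' -> y <> y' -> exists x x' N, S x /\ S x' /\ x <> x' /\
     Nat.iter N f y = Nat.iter N f x /\ Nat.iter N f y' = Nat.iter N f x') ->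
  synd_scrambled d f T /\ (forall eps, synd_eps_scrambled d f S eps -> synd_eps_scrambled d f T eps).
Proof.
  intros HS H2 Hc.
  assert (main : synd_scrambled d f T).
  { split; auto. intros y y' hy hy' ne.
    destruct (Hc y y' hy hy' ne) as [x [x' [N [sx [sx' [nx [e e']]]]]]].
    pose proof (orbit_eq x x' y y' N e e') as oe.
    destruct (proj2 HS x x' sx sx' nx) as [sp na]. split.
    - intros eta he B hB.
      destruct (sp eta he (fun n => (N <= n)%nat /\ B n)) as [n [h1 [h2 h3]]].
      + intros L. destruct (hB (L + N)%nat) as [m hm]. exists (m + N)%nat.
        intros i hi. split; [lia|]. replace (m + N + i)%nat with (m + (N + i))%nat by lia.
        apply hm; lia.
      + exists n. rewrite oe; auto.
    - intros ha. apply na. intros eps he. destruct (ha eps he) as [N0 hN0].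
      exists (max N0 N). intros n hn. rewrite <- oe by lia. apply hN0. lia. }
  split; auto. intros eps [_ He]. split; auto.
  intros y y' hy hy' ne.
  destruct (Hc y y' hy hy' ne) as [x [x' [N [sx [sx' [nx [e e']]]]]]].
  pose proof (orbit_eq x x' y y' N e e') as oe.
  intros delta hd N0. destruct (He x x' sx sx' nx delta hd (max N0 N)) as [n [hn h]].
  exists n. split; [lia|]. rewrite oe; auto. lia.
Qed.

End Transfer.

Section Setup.
Context {X : Type} (d : X -> X -> R) (Hd : is_metric d)
  (Hcpt : is_compact d (fun _ => True)).

Lemma basis (x0 : X) : exists (c : nat -> X) (r : nat -> R), (forall k, 0 < r k) /\
  forall U, is_open d U -> nonempty U -> exists k, forall y, d (c k) y <= r k -> U y.
Proof.
  destruct (dense_seq d Hd Hcpt x0) as [e He].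
  exists (fun k => e (fst (of_nat k))), (fun k => / (INR (snd (of_nat k)) + 1)).
  split; [intros; apply inv_pos|].
  intros U HU [x ux]. destruct (HU x ux) as [rho [hr Hr]].
  destruct (small_inv (rho / 2)) as [m hm]; [lra|].
  destruct (He x (/ (INR m + 1))) as [j hj]; [apply inv_pos|].
  exists (to_nat (j, m)). rewrite cancel_of_to. simpl. intros y hy.
  apply Hr. pose proof (d_tri d Hd x (e j) y). rewrite (d_sym d Hd x (e j)) in H. lra.
Qed.

Lemma cont_id : continuous d (fun x => x).
Proof. intros x e he. exists e; split; auto. Qed.

Lemma decomp (S0 : X -> Prop) : uncountable_set S0 ->
  exists A : nat -> X -> Prop, (forall k, uncountable_set (A k)) /\ (forall k x, A k x -> S0 x) /\
    (forall k j x, A k x -> A j x -> k = j) /\ (is_closed d S0 -> forall k, is_closed d (A k)).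
Proof.
  intros uS. destruct (uncount_ne S0 uS) as [x0 _].
  destruct (choice_fun (fun (W : X -> Prop) (q : X * R * R) => uncountable_set W ->
     snd (fst q) < snd q /\ uncountable_set (fun x => W x /\ d (fst (fst q)) x <= snd (fst q)) /\
                            uncountable_set (fun x => W x /\ snd q <= d (fst (fst q)) x))) as [P HP].
  { intros W. destruct (classic (uncountable_set W)) as [u|u].
    - destruct (split_lemma d Hd Hcpt W u) as [p [t1 [t2 h]]]. exists (p, t1, t2); auto.
    - exists (x0, 0, 0); tauto. }
  set (pp := fun W => fst (fst (P W))). set (t1 := fun W => snd (fst (P W))).
  set (t2 := fun W => snd (P W)).
  set (Rs := fix Rs n := match n with O => S0
     | Datatypes.S n => fun x => Rs n x /\ t2 (Rs n) <= d (pp (Rs n)) x end).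
  assert (RsS : forall n x, Rs (Datatypes.S n) x = (Rs n x /\ t2 (Rs n) <= d (pp (Rs n)) x)).
  { intros; reflexivity. }
  assert (Ru : forall n, uncountable_set (Rs n)).
  { induction n as [|n IH]; [exact uS|].
    destruct (HP _ IH) as [_ [_ h]]. eapply uncount_sup; [|exact h].
    intros x hx. rewrite RsS. exact hx. }
  assert (Rm : forall n m x, (n <= m)%nat -> Rs m x -> Rs n x).
  { intros n m x h. induction h; auto. intros hx; apply IHh. rewrite RsS in hx; apply hx. }
  exists (fun k x => Rs k x /\ d (pp (Rs k)) x <= t1 (Rs k)).
  split; [|split; [|split]].
  - intros k. destruct (HP _ (Ru k)) as [_ [h _]]. exact h.
  - intros k x [h _]. apply (Rm 0%nat k x); [lia|auto].
  - intros k j x [h1 h2] [h3 h4].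
    assert (key : forall k j, (k < j)%nat -> Rs j x -> d (pp (Rs k)) x <= t1 (Rs k) -> False).
    { intros a b hab hb ha. apply (Rm (Datatypes.S a) b x) in hb; [|lia].
      rewrite RsS in hb. destruct hb as [_ hb]. destruct (HP _ (Ru a)) as [hlt _].
      unfold t1, t2 in *. lra. }
    destruct (Nat.lt_trichotomy k j) as [a|[a|a]]; auto; exfalso; eauto.
  - intros Sc. assert (Rc : forall n, is_closed d (Rs n)).
    { induction n as [|n IH]; auto.
      apply (closed_ext d (fun x => Rs n x /\ t2 (Rs n) <= d (pp (Rs n)) x)).
      + intros x; rewrite RsS; tauto.
      + apply closed_inter; auto. apply (closed_preim_ge d Hd (fun x => x)). apply cont_id. }
    intros k. apply closed_inter; auto. apply (closed_preim_le d Hd (fun x => x)). apply cont_id.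
Qed.

End Setup.

Lemma iter_combine {X : Type} (f : X -> X) a b y x y' x' :
  Nat.iter a f y = Nat.iter a f x -> Nat.iter b f y' = Nat.iter b f x' ->
  Nat.iter (b + a) f y = Nat.iter (b + a) f x /\ Nat.iter (b + a) f y' = Nat.iter (b + a) f x'.
Proof.
  intros h1 h2. split.
  - rewrite !Nat.iter_add, h1; auto.
  - rewrite Nat.add_comm, !Nat.iter_add, h2; auto.
Qed.

Theorem lemma3p10 (X : Type) (d : X -> X -> R) (f : X -> X)
  (Hd : is_metric d) (Hcpt : is_compact d (fun _ => True))
  (Hf : continuous d f) (S : X -> Prop)
  (HSunc : uncountable_set S) (HSscr : synd_scrambled d f S)
  (HSU : forall U, is_open d U -> nonempty U ->
     exists n : nat, forall x, S x -> exists u, U u /\ Nat.iter n f u = Nat.iter n f x) :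
  (exists T, c_dense d T /\ synd_scrambled d f T /\
     (forall eps, synd_eps_scrambled d f S eps -> synd_eps_scrambled d f T eps)) /\
  (cantor_set d S ->
   exists T, c_dense d T /\ synd_scrambled d f T /\ dense d T /\ mycielski_set d T /\
     (forall eps, synd_eps_scrambled d f S eps -> synd_eps_scrambled d f T eps)).
Proof.
  destruct (uncount_ne S HSunc) as [x0 _].
  destruct (basis d Hd Hcpt x0) as [c [r [rp Hb]]].
  destruct (decomp d Hd Hcpt S HSunc) as [A [Au [AS [Adj Acl]]]].
  assert (Sinj : forall n x x', S x -> S x' -> Nat.iter n f x = Nat.iter n f x' -> x = x').
  { intros n x x' h1 h2 e. exact (S_inj d f Hd S x x' n HSscr h1 h2 e). }
  destruct (choice_fun (fun k n => forall x, S x -> exists u, d (c k) u < r k /\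
      Nat.iter n f u = Nat.iter n f x)) as [nn Hn].
  { intros k. apply HSU; [apply open_ball; auto|]. exists (c k). rewrite (d_xx d Hd); auto. }
  assert (cd2 : forall T, c_dense d T -> exists y y', T y /\ T y' /\ y <> y').
  { intros T HT. assert (hfull : is_open d (fun _ : X => True)) by (intros x _; exists 1; split; [lra|auto]).
    destruct (uncount_two _ (HT (fun _ => True) hfull (ex_intro _ x0 I)))
      as [y [y' [[h1 _] [[h2 _] h3]]]]. eauto. }
  split.
  - destruct (choice_fun (fun (p : nat * X) u => S (snd p) -> d (c (fst p)) u < r (fst p) /\
      Nat.iter (nn (fst p)) f u = Nat.iter (nn (fst p)) f (snd p))) as [uu Hu].
    { intros [k x]. simpl. destruct (classic (S x)) as [sx|sx].
      - destruct (Hn k x sx) as [u hu]. exists u; auto.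
      - exists x0; tauto. }
    set (T := fun y => exists k x, A k x /\ y = uu (k, x)).
    assert (cdT : c_dense d T).
    { intros U HU hne. destruct (Hb U HU hne) as [k hk].
      apply (uncount_sup (fun w => exists z, A k z /\ uu (k, z) = w)).
      - intros w [z [az e]]. subst. split; [exists k, z; auto|].
        apply hk. destruct (Hu (k, z) (AS k z az)) as [h _]. simpl in h. lra.
      - apply uncount_inj; auto. intros x x' ax ax' e.
        apply (Sinj (nn k)); try eapply AS; eauto.
        destruct (Hu (k, x) (AS k x ax)) as [_ h1]. destruct (Hu (k, x') (AS k x' ax')) as [_ h2].
        simpl in h1, h2. rewrite <- h1, <- h2, e. auto. }
    exists T. split; auto.
    apply (transfer d f S T HSscr (cd2 T cdT)).
    intros y y' [k [x [ax ey]]] [j [x' [ax' ey']]] ne.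
    assert (nx : x <> x').
    { intro e; subst x'. assert (k = j) by (eapply Adj; eauto). subst. auto. }
    destruct (Hu (k, x) (AS k x ax)) as [_ h1]. destruct (Hu (j, x') (AS j x' ax')) as [_ h2].
    simpl in h1, h2. rewrite <- ey in h1. rewrite <- ey' in h2.
    destruct (iter_combine f _ _ _ _ _ _ h1 h2) as [e1 e2].
    exists x, x', (nn j + nn k)%nat. repeat split; eauto.
  - intros Scant.
    assert (Sc : is_closed d S) by (apply (compact_closed d Hd); apply Scant).
    set (K0 := fun k z => d (c k) z <= r k /\ img (Nat.iter (nn k) f) (A k) (Nat.iter (nn k) f z)).
    destruct (choice_fun (fun k C => cantor_set d C /\ uncountable_set C /\
       (forall z, C z -> K0 k z) /\
       (forall z z', C z -> C z' -> Nat.iter (nn k) f z = Nat.iter (nn k) f z' -> z = z')))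
      as [CC HC].
    { intros k. apply (build d Hd Hcpt); [apply cont_iter; auto| |].
      - apply closed_inter; [apply closed_cball; auto|].
        apply closed_preim; [apply cont_iter; auto|].
        apply (compact_closed d Hd). apply image_compact; [apply cont_iter; auto|].
        apply (closed_compact d Hcpt). apply Acl; auto.
      - apply (uncount_sup (img (Nat.iter (nn k) f) (A k))).
        + intros w [x [ax e]]. subst w. destruct (Hn k x (AS k x ax)) as [u [hu eu]].
          exists u. split; auto. split; [lra|]. exists x; auto.
        + apply uncount_inj; auto. intros x x' ax ax' e.
          apply (Sinj (nn k)); try eapply AS; eauto. }
    set (T := fun y => exists k, CC k y).
    assert (cdT : c_dense d T).
    { intros U HU hne. destruct (Hb U HU hne) as [k hk].
      apply (uncount_sup (CC k)); [|apply HC].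
      intros y hy. split; [exists k; auto|]. apply hk. apply (proj1 (proj2 (proj2 (HC k))) y hy). }
    exists T. split; auto.
    assert (scr := transfer d f S T HSscr (cd2 T cdT)).
    assert (Hsc : synd_scrambled d f T /\
      (forall eps, synd_eps_scrambled d f S eps -> synd_eps_scrambled d f T eps)).
    { apply scr. intros y y' [k hy] [j hy'] ne.
      destruct (proj1 (proj2 (proj2 (HC k))) y hy) as [_ [x [ax h1]]].
      destruct (proj1 (proj2 (proj2 (HC j))) y' hy') as [_ [x' [ax' h2]]].
      assert (nx : x <> x').
      { intro e; subst x'. assert (k = j) by (eapply Adj; eauto). subst j.
        apply ne. apply (proj2 (proj2 (proj2 (HC k)))); auto. rewrite <- h1, <- h2. auto. }
      symmetry in h1, h2.
      destruct (iter_combine f _ _ _ _ _ _ h1 h2) as [e1 e2].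
      exists x, x', (nn j + nn k)%nat. repeat split; eauto. }
    destruct Hsc as [Hs He]. split; auto. split.
    + intros U HU hne. destruct (uncount_ne _ (cdT U HU hne)) as [y [ty uy]]. eauto.
    + split; auto. exists CC. split; [intros k; apply HC|]. intros x; unfold T; tauto.
Qed.
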